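(* (1) For every non-empty set $A$ and every mapping $\varphi: A\to\mathbb{M}_A$ in E-form, the magma $\mathbb{E}(\varphi)$ is equidecomposable. (2) Every finitely presented equidecomposable magma $M$ is isomorphic to $\mathbb{E}(\varphi)$ for some non-empty set $A$ and some mapping $\varphi: A\to \mathbb{M}_A$ in E-form.
   Context: A magma is a set with a binary operation $+$. A magma $M$ is equidecomposable if for all $x,y,x',y'\in M$, $x+y=x'+y'$ implies $x=x'$ and $y=y'$. For a non-empty set $A$, $\mathbb{M}_A$ is the free magma on $A$ (non-associative words over $A$, with $x+y=(x,y)$). For $y\in\mathbb{M}_A$, $g(y)\subseteq A$ is the set of letters of $A$ occurring in $y$. A mapping $\varphi: A\to\mathbb{M}_A$ is in E-form if it is injective and $a\in g(\varphi(a))$ for every $a\in A$. For a magma $M$, $M^2$ has the componentwise operation. A congruence on $M$ is an equivalence relation that is a submagma of $M^2$; it is closed if $(x+x',y+y')\in\theta$ implies $(x,y),(x',y')\in\theta$. For $X\subseteq M^2$, $\boxminus(X)$ is the least closed congruence on $M$ containing $X$. Regarding $\varphi$ as $\{(a,\varphi(a)):a\in A\}\subseteq\mathbb{M}_A^2$, put $\mathbb{E}(\varphi)=\mathbb{M}_A/\boxminus(\varphi)$. A presentation is a pair $(A\mid R)$ with $A$ a non-empty set and $R\subseteq\mathbb{M}_A^2$; it defines the magma $\langle A\mid R\rangle=\mathbb{M}_A/\boxminus(R)$. An equidecomposable magma $M$ is finitely presented if $M\cong\langle A\mid R\rangle$ for some presentation with $A$ and $R$ finite. *)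

(* Defs.v *)
From Stdlib Require Import List IndefiniteDescription.
Set Implicit Arguments.

Record magma := Magma { mcar :> Type; mop : mcar -> mcar -> mcar }.
Arguments mop {m} _ _.

Definition equidecomposable (M : magma) : Prop :=
  forall x y x' y' : M, mop x y = mop x' y' -> x = x' /\ y = y'.

Definition magma_iso {M N : magma} (f : M -> N) : Prop :=
  (forall x y : M, f (mop x y) = mop (f x) (f y)) /\
  (forall x y : M, f x = f y -> x = y) /\
  (forall z : N, exists x : M, f x = z).

Definition isomorphic (M N : magma) : Prop := exists f : M -> N, @magma_iso M N f.

Inductive word (A : Type) : Type :=
| Letter : A -> word A
| Pair : word A -> word A -> word A.

Definition free_magma (A : Type) : magma := @Magma (word A) (@Pair A).

Fixpoint occurs (A : Type) (a : A) (y : word A) : Prop :=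
  match y with
  | Letter b => a = b
  | Pair u v => occurs a u \/ occurs a v
  end.

Definition E_form (A : Type) (phi : A -> word A) : Prop :=
  (forall a b, phi a = phi b -> a = b) /\ (forall a, occurs a (phi a)).

Definition relation (M : magma) := M -> M -> Prop.

Definition is_equivalence (M : magma) (t : relation M) : Prop :=
  (forall x, t x x) /\ (forall x y, t x y -> t y x) /\
  (forall x y z, t x y -> t y z -> t x z).

Definition is_congruence (M : magma) (t : relation M) : Prop :=
  is_equivalence t /\
  (forall x y x' y', t x y -> t x' y' -> t (mop x x') (mop y y')).

Definition is_closed_congruence (M : magma) (t : relation M) : Prop :=
  is_congruence t /\
  (forall x y x' y', t (mop x x') (mop y y') -> t x y /\ t x' y').

Definition boxminus (M : magma) (X : relation M) : relation M :=
  fun x y => forall t : relation M, is_closed_congruence t ->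
    (forall p q, X p q -> t p q) -> t x y.

(** Quotient magma M / t: carrier = equivalence classes, operation via
    representatives (well defined when t is a congruence). *)
Definition qcar (M : magma) (t : relation M) : Type :=
  { P : M -> Prop | exists x : M, P = t x }.

Definition qrep (M : magma) (t : relation M) (P : qcar t) : M :=
  proj1_sig (constructive_indefinite_description _ (proj2_sig P)).

Definition qclass (M : magma) (t : relation M) (x : M) : qcar t :=
  exist (fun P => exists x0 : M, P = t x0) (t x) (ex_intro _ x eq_refl).

Definition quotient (M : magma) (t : relation M) : magma :=
  @Magma (qcar t) (fun P Q => qclass t (mop (qrep P) (qrep Q))).

Definition graph_rel (A : Type) (phi : A -> word A) : relation (free_magma A) :=
  fun x y => exists a, x = Letter a /\ y = phi a.

Definition Emagma (A : Type) (phi : A -> word A) : magma :=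
  quotient (boxminus (graph_rel phi)).

Definition presented (A : Type) (R : relation (free_magma A)) : magma :=
  quotient (boxminus R).

Definition finite_type (A : Type) : Prop := exists l : list A, forall a, In a l.

Definition finite_rel (A : Type) (R : relation (free_magma A)) : Prop :=
  exists l : list (word A * word A), forall p q, R p q <-> In (p, q) l.

Definition finitely_presented (M : magma) : Prop :=
  exists (A : Type) (R : relation (free_magma A)),
    inhabited A /\ finite_type A /\ finite_rel R /\ isomorphic M (presented R).

(* Main.v *)
Require Import Defs.
From Stdlib Require Import List Classical IndefiniteDescription FunctionalExtensionality PropExtensionality ProofIrrelevance Arith Lia.
Import ListNotations.

Lemma bm_cc {M : magma} (X : relation M) : is_closed_congruence (boxminus X).
Proof.
  unfold boxminus. split; [split; [split; [|split]|]|].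
  - intros x t Ht _. destruct Ht as [[[Hr [Hs Htr]] Hc] Hcl]. apply Hr.
  - intros x y H t Ht HX. pose proof Ht as [[[Hr [Hs Htr]] Hc] Hcl]. apply Hs. apply H; auto.
  - intros x y z H1 H2 t Ht HX. pose proof Ht as [[[Hr [Hs Htr]] Hc] Hcl].
    apply (Htr x y z); [apply H1|apply H2]; auto.
  - intros x y x' y' H1 H2 t Ht HX. pose proof Ht as [[[Hr [Hs Htr]] Hc] Hcl].
    apply Hc; [apply H1|apply H2]; auto.
  - intros x y x' y' H; split; intros t Ht HX; destruct (proj2 Ht _ _ _ _ (H t Ht HX)); auto.
Qed.

Lemma bm_gen {M : magma} (X : relation M) p q : X p q -> boxminus X p q.
Proof. intros H t _ HX. auto. Qed.

Lemma bm_least {M : magma} (X : relation M) {t : relation M} :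
  is_closed_congruence t -> (forall p q, X p q -> t p q) ->
  forall x y, boxminus X x y -> t x y.
Proof. intros Ht HX x y H. apply H; auto. Qed.

Section FreeBM.
Variable A : Type.
Variable X : relation (free_magma A).
Notation th := (boxminus X).
Lemma th_refl (x : word A) : th x x.
Proof. exact (proj1 (proj1 (proj1 (bm_cc X))) x). Qed.
Lemma th_sym (x y : word A) : th x y -> th y x.
Proof. exact (proj1 (proj2 (proj1 (proj1 (bm_cc X)))) x y). Qed.
Lemma th_trans (x y z : word A) : th x y -> th y z -> th x z.
Proof. exact (proj2 (proj2 (proj1 (proj1 (bm_cc X)))) x y z). Qed.
Lemma th_cong (x y x' y' : word A) : th x y -> th x' y' -> th (Pair x x') (Pair y y').
Proof. exact (proj2 (proj1 (bm_cc X)) x y x' y'). Qed.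
Lemma th_dec (x y x' y' : word A) : th (Pair x x') (Pair y y') -> th x y /\ th x' y'.
Proof. exact (proj2 (bm_cc X) x y x' y'). Qed.
End FreeBM.

Section Quot.
Variable M : magma.
Variable t : relation M.
Hypothesis Ht : is_equivalence t.

Lemma qsig_eq (P Q : qcar t) : proj1_sig P = proj1_sig Q -> P = Q.
Proof. destruct P as [p hp], Q as [q hq]; simpl; intros E; subst; f_equal; apply proof_irrelevance. Qed.

Lemma qrep_spec (P : qcar t) : proj1_sig P = t (qrep P).
Proof. unfold qrep. destruct (constructive_indefinite_description _ (proj2_sig P)) as [x Hx]. simpl. exact Hx. Qed.

Lemma qclass_rep (P : qcar t) : qclass t (qrep P) = P.
Proof. apply qsig_eq; simpl; symmetry; apply qrep_spec. Qed.

Lemma qclass_eq x y : t x y -> qclass t x = qclass t y.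
Proof.
  destruct Ht as [Hr [Hs Htr]]. intros H. apply qsig_eq; simpl.
  extensionality z; apply propositional_extensionality; split; intro; eauto.
Qed.

Lemma qclass_inv x y : qclass t x = qclass t y -> t x y.
Proof.
  destruct Ht as [Hr [Hs Htr]]. intro E. apply (f_equal (@proj1_sig _ _)) in E; simpl in E.
  rewrite E; apply Hr.
Qed.

Lemma rep_class x : t x (qrep (qclass t x)).
Proof.
  destruct Ht as [Hr [Hs Htr]]. pose proof (qrep_spec (qclass t x)) as E; simpl in E.
  rewrite E; apply Hr.
Qed.

Lemma qeq (P Q : qcar t) : t (qrep P) (qrep Q) -> P = Q.
Proof.
  intros H. transitivity (qclass t (qrep P)); [symmetry; apply qclass_rep|].
  transitivity (qclass t (qrep Q)); [apply qclass_eq; auto | apply qclass_rep].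
Qed.
End Quot.
Arguments qsig_eq {M t}.
Arguments qrep_spec {M t}.
Arguments qclass_rep {M t}.
Arguments qclass_eq {M t}.
Arguments qclass_inv {M t}.
Arguments rep_class {M t}.
Arguments qeq {M t}.

Lemma quot_equi {M : magma} (t : relation M) : is_closed_congruence t -> equidecomposable (quotient t).
Proof.
  intros [[He Hc] Hcl] P Q P' Q' E. simpl in E. apply qclass_inv in E; auto.
  destruct (Hcl _ _ _ _ E). split; apply qeq; auto.
Qed.

Fixpoint subst {A B : Type} (f : A -> word B) (w : word A) : word B :=
  match w with
  | Letter a => f a
  | Pair u v => Pair (subst f u) (subst f v)
  end.

Lemma subst_comp {A B C : Type} (f : A -> word B) (g : B -> word C) (x : word A) :
  subst g (subst f x) = subst (fun a => subst g (f a)) x.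
Proof. induction x; simpl; congruence. Qed.

Lemma pullback_cc {A B : Type} (f : A -> word B) (t : relation (free_magma B)) :
  is_closed_congruence t ->
  is_closed_congruence (M := free_magma A) (fun x y => t (subst f x) (subst f y)).
Proof.
  intros [[[Hr [Hs Htr]] Hc] Hcl]. split; [split; [split; [|split]|]|]; simpl.
  - intros x; apply Hr.
  - intros x y; apply Hs.
  - intros x y z; apply Htr.
  - intros x y x' y' H1 H2; apply (Hc _ _ _ _ H1 H2).
  - intros x y x' y' H; apply (Hcl _ _ _ _ H).
Qed.

Section Iso.
Variables A B : Type.
Variable R : relation (free_magma A).
Variable X : relation (free_magma B).
Variable sg : A -> word B.
Variable tau : B -> word A.
Hypothesis C1 : forall p q, R p q -> boxminus X (subst sg p) (subst sg q).
Hypothesis C2 : forall p q, X p q -> boxminus R (subst tau p) (subst tau q).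
Hypothesis C3 : forall a, boxminus R (subst tau (sg a)) (Letter a).
Hypothesis C4 : forall b, boxminus X (subst sg (tau b)) (Letter b).

Lemma pullA x y : boxminus R x y -> boxminus X (subst sg x) (subst sg y).
Proof.
  apply (@bm_least (free_magma A) R (fun x y : word A => boxminus X (subst sg x) (subst sg y))); auto.
  apply pullback_cc, bm_cc.
Qed.
Lemma pullB x y : boxminus X x y -> boxminus R (subst tau x) (subst tau y).
Proof.
  apply (@bm_least (free_magma B) X (fun x y : word B => boxminus R (subst tau x) (subst tau y))); auto.
  apply pullback_cc, bm_cc.
Qed.
Lemma retA x : boxminus R (subst tau (subst sg x)) x.
Proof.
  induction x; simpl; [apply C3| apply th_cong; auto].
Qed.
Lemma retB y : boxminus X (subst sg (subst tau y)) y.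
Proof.
  induction y; simpl; [apply C4| apply th_cong; auto].
Qed.

Lemma iso_quot : isomorphic (quotient (boxminus R)) (quotient (boxminus X)).
Proof.
  pose proof (proj1 (proj1 (bm_cc R))) as EA.
  pose proof (proj1 (proj1 (bm_cc X))) as EB.
  exists (fun P : qcar (boxminus R) => qclass (boxminus X) (subst sg (qrep P))).
  split; [|split].
  - intros P Q. simpl. apply qclass_eq; auto.
    eapply th_trans; [apply pullA; apply th_sym; apply (rep_class EA)|].
    simpl. apply th_cong; apply (rep_class EB).
  - intros P Q E. apply qclass_inv in E; auto. apply qeq; auto.
    apply pullB in E.
    eapply th_trans; [apply th_sym, retA|]. eapply th_trans; [apply E|]. apply retA.
  - intros Z. exists (qclass (boxminus R) (subst tau (qrep Z))).
    transitivity (qclass (boxminus X) (qrep Z)); [|apply qclass_rep].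
    apply qclass_eq; auto.
    eapply th_trans; [apply pullA; apply th_sym; apply (rep_class EA)|]. apply retB.
Qed.
End Iso.

Lemma iso_comp (M N P : magma) (f : M -> N) (g : N -> P) :
  magma_iso f -> magma_iso g -> magma_iso (fun x => g (f x)).
Proof.
  intros [H1 [I1 S1]] [H2 [I2 S2]]. split; [|split].
  - intros x y. rewrite H1, H2. auto.
  - intros x y E. auto.
  - intros z. destruct (S2 z) as [y <-]. destruct (S1 y) as [x <-]. eauto.
Qed.

Definition emi (P : Prop) : {P} + {~ P}.
Proof.
  destruct (constructive_indefinite_description (fun b : bool => if b then P else ~ P)) as [[|] H].
  - destruct (classic P) as [H|H]; [exists true | exists false]; exact H.
  - left; exact H.
  - right; exact H.
Defined.

Section Constr.
Variable A : Type.
Variable a0 : A.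
Variable lA : list A.
Hypothesis HlA : forall a, In a lA.
Variable R : relation (free_magma A).
Variable lR : list (word A * word A).
Hypothesis HlR : forall p q, R p q <-> In (p, q) lR.

Definition th : word A -> word A -> Prop := boxminus R.

Fixpoint subterms (w : word A) : list (word A) :=
  w :: match w with Letter _ => [] | Pair u v => subterms u ++ subterms v end.

Definition Sl : list (word A) :=
  flat_map (fun pq => subterms (fst pq) ++ subterms (snd pq)) lR ++ map (@Letter A) lA.

Lemma subterms_self w : In w (subterms w).
Proof. destruct w; simpl; auto. Qed.

Lemma subterms_closed {w u v} : In (Pair u v) (subterms w) -> In u (subterms w) /\ In v (subterms w).
Proof.
  induction w as [a|w1 IH1 w2 IH2]; simpl; intros H.
  - destruct H as [H|[]]; discriminate.
  - destruct H as [H|H].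
    + injection H as <- <-. split; right; apply in_or_app; [left|right]; apply subterms_self.
    + apply in_app_or in H. destruct H as [H|H].
      * destruct (IH1 H). split; right; apply in_or_app; left; auto.
      * destruct (IH2 H). split; right; apply in_or_app; right; auto.
Qed.

Lemma S_closed {u v} : In (Pair u v) Sl -> In u Sl /\ In v Sl.
Proof.
  unfold Sl. intros H. apply in_app_or in H. destruct H as [H|H].
  - apply in_flat_map in H. destruct H as [pq [Hpq H]].
    apply in_app_or in H. destruct H as [H|H]; apply subterms_closed in H; destruct H as [H1 H2];
      split; apply in_or_app; left; apply in_flat_map; exists pq; split; auto; apply in_or_app; auto.
  - apply in_map_iff in H. destruct H as [a [H _]]. discriminate.
Qed.

Lemma S_letter a : In (Letter a) Sl.
Proof. unfold Sl. apply in_or_app; right. apply in_map; auto. Qed.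

Lemma S_R {p q} : R p q -> In p Sl /\ In q Sl.
Proof.
  intros H. apply HlR in H. unfold Sl. split; apply in_or_app; left; apply in_flat_map; exists (p, q);
    split; auto; simpl; apply in_or_app; [left|right]; apply subterms_self.
Qed.

Lemma th_refl' x : th x x. Proof. apply th_refl. Qed.
Lemma th_sym' x y : th x y -> th y x. Proof. apply th_sym. Qed.
Lemma th_trans' x y z : th x y -> th y z -> th x z. Proof. apply th_trans. Qed.
Lemma th_cong' x y x' y' : th x y -> th x' y' -> th (Pair x x') (Pair y y'). Proof. apply th_cong. Qed.
Lemma th_dec' x y x' y' : th (Pair x x') (Pair y y') -> th x y /\ th x' y'. Proof. apply th_dec. Qed.

Fixpoint first (P : word A -> Prop) (l : list (word A)) (d : word A) : word A :=
  match l with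
  | [] => d
  | x :: l' => if emi (P x) then x else first P l' d
  end.

Lemma first_spec P l d : (exists x, In x l /\ P x) -> In (first P l d) l /\ P (first P l d).
Proof.
  induction l as [|x l IH]; simpl; intros [y [Hy HP]]; [destruct Hy|].
  destruct (emi (P x)) as [H|H]; [auto|].
  destruct Hy as [->|Hy]; [contradiction|].
  destruct IH as [H1 H2]; eauto.
Qed.

Lemma first_ext P Q l d d' : (forall x, P x <-> Q x) -> (exists x, In x l /\ P x) ->
  first P l d = first Q l d'.
Proof.
  intros HPQ. induction l as [|x l IH]; simpl; intros [y [Hy HP]]; [destruct Hy|].
  destruct (emi (P x)) as [H|H]; destruct (emi (Q x)) as [H'|H']; try tauto.
  - exfalso; apply H', HPQ, H.
  - exfalso; apply H, HPQ, H'.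
  - destruct Hy as [->|Hy]; [contradiction|]. eauto.
Qed.

Definition can (s : word A) : word A := first (th s) Sl s.

Lemma can_spec {s} : In s Sl -> In (can s) Sl /\ th s (can s).
Proof. intros H. apply first_spec. exists s; split; auto. apply th_refl'. Qed.

Lemma can_eq {s t} : In s Sl -> th s t -> can s = can t.
Proof.
  intros Hs H. unfold can. apply first_ext.
  - intros x; split; intro; eauto using th_trans', th_sym'.
  - exists s; split; auto. apply th_refl'.
Qed.

Definition inK k := In k Sl /\ can k = k.

Lemma inK_can {s} : In s Sl -> inK (can s).
Proof.
  intros H. destruct (can_spec H) as [H1 H2]. split; auto.
  symmetry. apply can_eq; auto.
Qed.

Definition bound (k : word A) : Prop :=
  exists pr : word A * word A, In (Pair (fst pr) (snd pr)) Sl /\ th k (Pair (fst pr) (snd pr)).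

Definition bind (k : word A) : word A * word A :=
  match emi (bound k) with
  | left h => proj1_sig (constructive_indefinite_description _ h)
  | right _ => (k, k)
  end.

Lemma bind_spec {k} : bound k ->
  In (Pair (fst (bind k)) (snd (bind k))) Sl /\ th k (Pair (fst (bind k)) (snd (bind k))).
Proof.
  intros Hb. unfold bind. destruct (emi (bound k)) as [h|h]; [|contradiction].
  destruct (constructive_indefinite_description _ h) as [pr Hpr]. simpl. exact Hpr.
Qed.

Definition c1 k := can (fst (bind k)).
Definition c2 k := can (snd (bind k)).

Lemma c_spec {k} : bound k -> inK (c1 k) /\ inK (c2 k) /\ th k (Pair (c1 k) (c2 k)).
Proof.
  intros Hb. destruct (bind_spec Hb) as [HS Hth]. destruct (S_closed HS) as [H1 H2].
  unfold c1, c2. split; [apply inK_can; auto|split; [apply inK_can; auto|]].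
  eapply th_trans'; [apply Hth|]. apply th_cong'; apply can_spec; auto.
Qed.

Lemma c_pair {s1 s2} : In (Pair s1 s2) Sl ->
  bound (can (Pair s1 s2)) /\ c1 (can (Pair s1 s2)) = can s1 /\ c2 (can (Pair s1 s2)) = can s2.
Proof.
  intros HS. destruct (S_closed HS) as [H1 H2]. destruct (can_spec HS) as [HS' Hth].
  assert (Hb : bound (can (Pair s1 s2))).
  { exists (s1, s2); simpl; split; auto. apply th_sym'; auto. }
  split; auto.
  destruct (bind_spec Hb) as [HP HP'].
  assert (E : th (Pair s1 s2) (Pair (fst (bind (can (Pair s1 s2)))) (snd (bind (can (Pair s1 s2)))))).
  { eapply th_trans'; [apply Hth|apply HP']. }
  apply th_dec' in E. destruct E as [E1 E2].
  unfold c1, c2. split; symmetry; apply can_eq; auto.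
Qed.

Definition inB (G : list (word A)) k := inK k /\ (~ bound k \/ In k G).
Definition child (G : list (word A)) k' k :=
  inK k /\ bound k /\ ~ In k G /\ (k' = c1 k \/ k' = c2 k).
Definition FVS G := forall k, Acc (child G) k.

Definition remove (g : word A) (G : list (word A)) :=
  filter (fun x => if emi (x = g) then false else true) G.

Lemma remove_In g G x : In x (remove g G) <-> In x G /\ x <> g.
Proof.
  unfold remove. rewrite filter_In. destruct (emi (x = g)); split; intros [H1 H2]; auto; try discriminate; contradiction.
Qed.

Lemma remove_len {g G} : In g G -> length (remove g G) < length G.
Proof.
  induction G as [|x G IH]; simpl; intros H; [destruct H|].
  unfold remove in *; simpl. destruct (emi (x = g)) as [E|E].
  - pose proof (filter_length_le (fun x => if emi (x = g) then false else true) G). lia.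
  - destruct H as [H|H]; [congruence|]. simpl. specialize (IH H). lia.
Qed.

Lemma FVS_S : FVS Sl.
Proof. intros k. constructor. intros y [[H _] [_ [H' _]]]. contradiction. Qed.

Lemma min_exists n : forall G, length G <= n -> FVS G ->
  exists G', FVS G' /\ forall g, In g G' -> ~ FVS (remove g G').
Proof.
  induction n as [|n IH]; intros G Hl HF;
  (destruct (classic (exists g, In g G /\ FVS (remove g G))) as [[g [Hg HF']]|Hn];
    [|exists G; split; auto; intros g Hg HF'; apply Hn; eauto]).
  - destruct G; simpl in *; [destruct Hg| lia].
  - apply (IH (remove g G)); auto. pose proof (remove_len Hg). lia.
Qed.


Section WithG.
Variable G : list (word A).
Hypothesis HF : FVS G.
Hypothesis Hmin : forall g, In g G -> ~ FVS (remove g G).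

Definition Bt := {k : word A | inB G k}.

Inductive Unf : word A -> word Bt -> Prop :=
| UL k (h : inB G k) : Unf k (Letter (exist _ k h))
| UN k w1 w2 : inK k -> bound k -> ~ In k G -> Unf (c1 k) w1 -> Unf (c2 k) w2 -> Unf k (Pair w1 w2).

Lemma Unf_ex {k} : inK k -> exists w, Unf k w.
Proof.
  induction (HF k) as [k _ IH]. intros Hk.
  destruct (classic (inB G k)) as [Hb|Hb].
  - exists (Letter (exist _ k Hb)); constructor.
  - assert (Hbd : bound k /\ ~ In k G).
    { split; [apply NNPP|]; intro; apply Hb; split; auto. }
    destruct Hbd as [Hbd HnG]. destruct (c_spec Hbd) as [K1 [K2 _]].
    assert (C1 : child G (c1 k) k) by (repeat split; auto; apply Hk).
    assert (C2 : child G (c2 k) k) by (repeat split; auto; apply Hk).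
    destruct (IH (c1 k) C1 K1) as [w1 H1].
    destruct (IH (c2 k) C2 K2) as [w2 H2].
    exists (Pair w1 w2); constructor; auto.
Qed.

Lemma Unf_uniq {k w} : Unf k w -> forall w', Unf k w' -> w = w'.
Proof.
  induction 1 as [k h|k w1 w2 Hk Hb HnG H1 IH1 H2 IH2]; intros w' H'; inversion H'; subst.
  - f_equal; f_equal; apply proof_irrelevance.
  - exfalso; clear H'; destruct h as [_ [h|h]]; contradiction.
  - exfalso; clear H'; match goal with h : inB G k |- _ => destruct h as [_ [h|h]]; contradiction end.
  - f_equal; auto.
Qed.

Fixpoint word_inh {T : Type} (w : word T) : T :=
  match w with Letter a => a | Pair u _ => word_inh u end.

Lemma B_ex : exists b : Bt, True.
Proof.
  destruct (Unf_ex (inK_can (S_letter a0))) as [w _].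
  exists (word_inh w); auto.
Qed.

Definition b0 : Bt := proj1_sig (constructive_indefinite_description _ B_ex).

Definition U (k : word A) : word Bt :=
  match emi (exists w, Unf k w) with
  | left h => proj1_sig (constructive_indefinite_description _ h)
  | right _ => Letter b0
  end.

Lemma U_spec {k} : inK k -> Unf k (U k).
Proof.
  intros Hk. unfold U. destruct (emi (exists w, Unf k w)) as [h|h].
  - destruct (constructive_indefinite_description _ h) as [w Hw]; simpl; auto.
  - exfalso; apply h, Unf_ex, Hk.
Qed.

Lemma U_leaf (b : Bt) : U (proj1_sig b) = Letter b.
Proof.
  destruct b as [k h]. simpl. symmetry. apply (Unf_uniq (UL _ h)). apply U_spec, h.
Qed.

Definition phi (b : Bt) : word Bt :=
  if emi (bound (proj1_sig b)) then Pair (U (c1 (proj1_sig b))) (U (c2 (proj1_sig b))) else Letter b.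

Definition sg (a : A) : word Bt := U (can (Letter a)).
Definition tau (b : Bt) : word A := proj1_sig b.

Lemma K1 {k w} : Unf k w -> th (subst tau w) k.
Proof.
  induction 1 as [k h|k w1 w2 Hk Hb HnG H1 IH1 H2 IH2]; simpl.
  - apply th_refl'.
  - eapply th_trans'; [apply th_cong'; eauto|]. apply th_sym'. apply (c_spec Hb).
Qed.

Definition thB : word Bt -> word Bt -> Prop := boxminus (graph_rel phi).

Lemma K2 k : inK k -> bound k -> thB (U k) (Pair (U (c1 k)) (U (c2 k))).
Proof.
  intros Hk Hb. destruct (classic (In k G)) as [HG|HG].
  - assert (h : inB G k) by (split; auto).
    pose proof (U_leaf (exist _ k h)) as E; simpl in E; rewrite E.
    replace (Pair (U (c1 k)) (U (c2 k))) with (phi (exist _ k h)).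
    + apply bm_gen. exists (exist _ k h); auto.
    + unfold phi; simpl. destruct (emi (bound k)); [auto|contradiction].
  - pose proof (U_spec Hk) as HU. remember (U k) as w. destruct HU as [k h|k w1 w2 _ _ _ H1 H2].
    + exfalso; clear - h Hb HG; destruct h as [_ [h|h]]; contradiction.
    + destruct (c_spec Hb) as [Q1 [Q2 _]].
      rewrite (Unf_uniq H1 _ (U_spec Q1)), (Unf_uniq H2 _ (U_spec Q2)). apply th_refl.
Qed.

Lemma K3 s : In s Sl -> thB (subst sg s) (U (can s)).
Proof.
  induction s as [a|s1 IH1 s2 IH2]; intros HS; simpl.
  - apply th_refl.
  - destruct (S_closed HS) as [H1 H2]. destruct (c_pair HS) as [Hb [E1 E2]].
    eapply th_trans; [apply th_cong; [apply IH1|apply IH2]; auto|].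
    apply th_sym. rewrite <- E1, <- E2. apply K2; auto. apply inK_can; auto.
Qed.

Lemma Eform : E_form phi.
Proof.
  split.
  - intros [k hk] [k' hk']. unfold phi; simpl.
    destruct (emi (bound k)) as [Hb|Hb]; destruct (emi (bound k')) as [Hb'|Hb']; intros E;
      try discriminate.
    + injection E as E1 E2.
      destruct (c_spec Hb) as [Q1 [Q2 Q3]]. destruct (c_spec Hb') as [Q1' [Q2' Q3']].
      assert (T : th k k').
      { eapply th_trans'; [apply Q3|]. eapply th_trans'; [|apply th_sym'; apply Q3'].
        apply th_cong'.
        - eapply th_trans'; [apply th_sym'; exact (K1 (U_spec Q1))|]. rewrite E1. exact (K1 (U_spec Q1')).
        - eapply th_trans'; [apply th_sym'; exact (K1 (U_spec Q2))|]. rewrite E2. exact (K1 (U_spec Q2')). }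
      destruct hk as [[HS Hc] X1], hk' as [[HS' Hc'] X2].
      pose proof (can_eq HS T) as E. rewrite Hc, Hc' in E. subst k'. f_equal. apply proof_irrelevance.
    + injection E; intros; subst; f_equal; apply proof_irrelevance.
  - intros [k hk]. unfold phi; simpl. destruct (emi (bound k)) as [Hb|Hb]; simpl; [|reflexivity].
    assert (HG : In k G) by (destruct hk as [_ [h|h]]; [contradiction|exact h]).
    apply NNPP; intro Hno. apply (Hmin k HG).
    set (G' := remove k G).
    assert (Y : forall j w, Unf j w -> ~ occurs (exist _ k hk) w -> Acc (child G') j).
    { induction 1 as [j h|j w1 w2 Hj Hbj HnG H1 IH1 H2 IH2]; intros Hn.
      - constructor. intros y [_ [Hbj [HnG _]]].
        pose proof h as [_ [h'|h']]; [contradiction|].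
        assert (j = k).
        { apply NNPP; intro Hne. apply HnG. apply remove_In; auto. }
        subst j. exfalso. apply Hn. simpl. f_equal. apply proof_irrelevance.
      - constructor. intros y [_ [_ [_ [->| ->]]]]; [apply IH1|apply IH2]; intro; apply Hn; simpl; auto. }
    destruct (c_spec Hb) as [Q1 [Q2 _]].
    assert (AK : Acc (child G') k).
    { constructor. intros y [_ [_ [_ [->| ->]]]].
      - apply (Y _ _ (U_spec Q1)). intro; apply Hno; auto.
      - apply (Y _ _ (U_spec Q2)). intro; apply Hno; auto. }
    intros j. induction (HF j) as [j _ IH].
    destruct (classic (j = k)) as [->|Hne]; auto.
    constructor. intros y [Hy1 [Hy2 [Hy3 Hy4]]]. apply IH.
    split; [exact Hy1|split; [exact Hy2|split; [|exact Hy4]]]. intro HjG. apply Hy3. apply remove_In; auto.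
Qed.

Lemma constr_iso : isomorphic (presented R) (Emagma phi).
Proof.
  unfold presented, Emagma. apply (@iso_quot A Bt R (graph_rel phi) sg tau).
  - intros p q H. destruct (S_R H) as [Hp Hq].
    assert (E : can p = can q) by (apply can_eq; auto; apply bm_gen; auto).
    eapply th_trans; [apply K3; auto|]. rewrite E. apply th_sym. apply K3; auto.
  - intros x y [b [-> ->]]. simpl. unfold phi. destruct (emi (bound (proj1_sig b))) as [Hb|Hb]; simpl.
    + destruct (c_spec Hb) as [Q1 [Q2 Q3]]. apply th_sym'.
      eapply th_trans'; [apply th_cong'; [exact (K1 (U_spec Q1))|exact (K1 (U_spec Q2))]|]. apply th_sym', Q3.
    + apply th_refl'.
  - intros a. unfold sg. eapply th_trans'; [exact (K1 (U_spec (inK_can (S_letter a))))|].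
    apply th_sym'; exact (proj2 (can_spec (S_letter a))).
  - intros [k h]. unfold tau; simpl. eapply th_trans; [apply K3; apply h|].
    pose proof (U_leaf (exist _ k h)) as E. simpl in E.
    replace (can k) with k by (symmetry; exact (proj2 (proj1 h))).
    rewrite E. apply th_refl.
Qed.

Lemma with_G_main : exists (B : Type) (ph : B -> word B), inhabited B /\ E_form ph /\ isomorphic (presented R) (Emagma ph).
Proof.
  exists Bt, phi. split; [exact (inhabits b0)|split; [apply Eform|apply constr_iso]].
Qed.
End WithG.

Lemma constr_main : exists (B : Type) (ph : B -> word B), inhabited B /\ E_form ph /\ isomorphic (presented R) (Emagma ph).
Proof.
  destruct (min_exists (length Sl) Sl (le_n _) FVS_S) as [G [HF Hmin]].
  exact (with_G_main G HF Hmin).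
Qed.
End Constr.

Theorem theorem8p2 :
  (forall (A : Type) (phi : A -> word A),
      inhabited A -> E_form phi -> equidecomposable (Emagma phi)) /\
  (forall M : magma,
      equidecomposable M -> finitely_presented M ->
      exists (A : Type) (phi : A -> word A),
        inhabited A /\ E_form phi /\ isomorphic M (Emagma phi)).
Proof.
  split.
  - intros A phi _ _. apply quot_equi, bm_cc.
  - intros M _ [A [R [[a0] [[lA HlA] [[lR HlR] [f Hf]]]]]].
    destruct (constr_main A a0 lA HlA R lR HlR) as [B [ph [HB [HE [g Hg]]]]].
    exists B, ph. split; [auto|split; [auto|]].
    exists (fun x => g (f x)). apply iso_comp; auto.
Qed.
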